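(* For every positive integer $n$, the poset $\widetilde\Pi(\mathbb{Z}_n)$ is isomorphic (as a poset, hence as a lattice) to the subgroup lattice $\mathcal{L}(\mathbb{Z}_n)$; in particular, $\widetilde\Pi(\mathbb{Z}_n)$ is a lattice.
   Context: For a finite group $G$ and a subgroup $H\le G$, let $\pi_e(H)=\{o(x)\mid x\in H\}$. Let $\mathcal{L}(G)$ be the lattice of subgroups of $G$ ordered by inclusion; define $H_1\equiv H_2$ iff $\pi_e(H_1)=\pi_e(H_2)$, with class $[H]$. The poset $\widetilde\Pi(G)$ is $\mathcal{L}(G)/\!\equiv$ ordered by $[H_1]\lesssim[H_2]$ iff $\pi_e(H_1)\subseteq\pi_e(H_2)$. $\mathbb{Z}_n$ is the cyclic group of order $n$. *)

(* Defs.v *)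
From mathcomp Require Import all_boot all_order all_algebra all_fingroup all_solvable.
Set Implicit Arguments. Unset Strict Implicit. Unset Printing Implicit Defensive.
Local Open Scope group_scope.

Section PiTilde.
Variable gT : finGroupType.

(* pi_e(H): the set of element orders of H, as a subset of {0,...,#|gT|}
   (every element order is at most #|gT|, so no information is lost). *)
Definition piE (H : {set gT}) : {set 'I_(#|gT|).+1} :=
  [set i : 'I_(#|gT|).+1 | [exists x in H, #[x] == i :> nat]].

Definition piclass (G : {set gT}) (H : {group gT}) : {set {group gT}} :=
  [set K in subgroups G | piE K == piE H].

Definition PiT (G : {set gT}) : {set {set {group gT}}} :=
  [set piclass G H | H in subgroups G].

(* The order on classes: [H1] <~ [H2] iff pi_e(H1) \subset pi_e(H2)
   (independent of representatives). *)
Definition le_cls (C D : {set {group gT}}) : bool :=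
  [exists H in C, exists K in D, piE H \subset piE K].

End PiTilde.

(* Main.v *)
Require Import Defs.
From mathcomp Require Import all_boot all_order all_algebra all_fingroup all_solvable.
Local Open Scope group_scope.
Set Implicit Arguments.

Section Gen.
Variable gT : finGroupType.

Lemma card_in_piE (G H : {group gT}) : cyclic G -> H \subset G ->
  exists i : 'I_(#|gT|).+1, (i \in Defs.piE H) /\ (nat_of_ord i = #|H|).
Proof.
move=> cG sHG.
have /cyclicP [x defH] := cyclicS sHG cG.
have lt : #|H| < #|gT|.+1 by rewrite ltnS max_card.
exists (Ordinal lt); split => //.
rewrite inE; apply/existsP; exists x.
rewrite /= orderE -defH eqxx andbT defH; exact: cycle_id.
Qed.

Lemma piE_sub (G H K : {group gT}) : cyclic G -> H \subset G -> K \subset G ->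
  (Defs.piE H \subset Defs.piE K) = (H \subset K).
Proof.
move=> cG sHG sKG; apply/idP/idP.
- move=> sub; have [i [Hi ei]] := @card_in_piE G H cG sHG.
  have := subsetP sub i Hi; rewrite inE => /existsP [y /andP [Ky /eqP oy]].
  rewrite -(cardSg_cyclic cG sHG sKG) -ei -oy; exact: order_dvdG.
- move=> sHK; apply/subsetP => i; rewrite !inE => /existsP [x /andP [Hx e]].
  by apply/existsP; exists x; rewrite (subsetP sHK) .
Qed.
End Gen.

Lemma cyclic_Zpn n : cyclic (Zp n).
Proof.
apply: (cyclicS (subsetT _)).
apply/cyclicP; exists (Zp1 : 'I_(Zp_trunc n).+2).
exact: (@Zp_cycle (Zp_trunc n).+1).
Qed.

Theorem theorem2p3 (n : nat) (hn : 0 < n) :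
  exists f : {group 'Z_n} -> {set {group 'Z_n}},
    [/\ {in subgroups (Zp n) &, injective f},
        f @: subgroups (Zp n) = PiT (Zp n)
      & {in subgroups (Zp n) &, forall H K : {group 'Z_n},
           (H \subset K) = le_cls (f H) (f K)}].
Proof.
have cG := cyclic_Zpn n.
have self : forall H : {group 'Z_n}, H \in subgroups (Zp n) -> H \in piclass (Zp n) H.
  by move=> H sH; rewrite inE sH eqxx.
exists (piclass (Zp n)); split => //.
- move=> H K sH sK eHK.
  have := self H sH; rewrite eHK inE => /andP [_ /eqP e].
  rewrite inE in sH; rewrite inE in sK.
  apply/val_inj/eqP; rewrite /= eqEsubset.
  by rewrite -(@piE_sub _ _ _ _ cG sH sK) -(@piE_sub _ _ _ _ cG sK sH) e subxx.
- move=> H K sH sK.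
  have sH' := sH; have sK' := sK; rewrite inE in sH'; rewrite inE in sK'.
  rewrite -(@piE_sub _ _ _ _ cG sH' sK'); apply/idP/existsP.
  + move=> s; exists H; apply/andP; split; first exact: self.
    apply/existsP; exists K; apply/andP; split; [exact: self | exact: s].
  + move=> [H1 /andP [H1in /existsP [K1 /andP [K1in s]]]].
    move: H1in K1in; rewrite !inE => /andP [_ /eqP e1] /andP [_ /eqP e2].
    by move: s; rewrite e1 e2.
Qed.
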